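(* In the setting of the context, let $(h_1,h_2)\in\mathbb C(s)^2$ satisfy $\widetilde\gamma_1h_1+\widetilde\gamma_2h_2+\omega=0$, $h_1^{\iota_1}=h_1$, $h_2^{\iota_2}=h_2$. Let $P$ be a pole of $h_1$ distinct from $0,\infty$. (i) If $P\notin\mathcal L_1^-$, then $\sigma^{-1}P$ is a pole of $h_1$. (ii) If $P\notin\mathcal L_1^+$, then $\sigma P$ is a pole of $h_1$. Let $P$ be a pole of $h_2$ distinct from $0,\infty$. (i') If $P\notin\mathcal L_2^-$, then $\sigma^{-1}P$ is a pole of $h_2$. (ii') If $P\notin\mathcal L_2^+$, then $\sigma P$ is a pole of $h_2$.
   Context: For a genus-zero weighted quadrant walk model (step set one of the five genus-zero sets, step weights $d_{i,j}>0$, Boltzmann weights $a,b>0$), $A=1-1/a$, $B=1-1/b$, $\omega=1-A-B$ (a constant). $s\mapsto(x(s),y(s))$ is a fixed rational parametrization by $\mathbb P^1$ of the kernel curve (for a fixed real $t$ transcendental over $\mathbb Q((d_{i,j}),a,b)$), with $x(1/s)=x(s)$, $y(q/s)=y(s)$ for a fixed real $q$ not a root of unity; $\iota_1(s)=1/s$, $\iota_2(s)=q/s$, $\sigma(s)=qs$, $h^\tau=h\circ\tau$. $\widetilde\gamma_1=A/x(s)-td_{1,-1}/y(s)$ and $\widetilde\gamma_2=B/y(s)-td_{-1,1}/x(s)$ have divisors $(\widetilde\gamma_1)=P_1+P_2-0-\infty$ and $(\widetilde\gamma_2)=P_3+P_4-0-\infty$ with $P_i\notin\{0,\infty\}$ (a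 fixed labelling). Define $\mathcal L_1^-=\{P_1,P_2,\iota_2P_3,\iota_2P_4\}$, $\mathcal L_1^+=\{\iota_1P_1,\iota_1P_2,\sigma^{-1}P_3,\sigma^{-1}P_4\}$, $\mathcal L_2^-=\{\sigma P_1,\sigma P_2,\iota_2P_3,\iota_2P_4\}$, $\mathcal L_2^+=\{\iota_1P_1,\iota_1P_2,P_3,P_4\}$. *)

(* Defs.v *)
From HB Require Import structures.
From mathcomp Require Import all_boot all_order all_algebra.
From mathcomp Require Import complex.
From mathcomp Require Import reals.
Set Implicit Arguments. Unset Strict Implicit. Unset Printing Implicit Defensive.
Import Order.TTheory GRing.Theory Num.Theory.
Local Open Scope ring_scope.

Section RatFun.
Variable R : realType.
Local Notation C := (R[i]).

Definition rfun := ({poly C} * {poly C})%type.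
Definition rf_valid (f : rfun) : bool := f.2 != 0.
Definition rf_eq (f g : rfun) : Prop := f.1 * g.2 = g.1 * f.2.
Definition rf_const (c : C) : rfun := (c%:P, 1).
Definition rf_add (f g : rfun) : rfun := (f.1 * g.2 + g.1 * f.2, f.2 * g.2).
Definition rf_mul (f g : rfun) : rfun := (f.1 * g.1, f.2 * g.2).
Definition rf_inv (f : rfun) : rfun := (f.2, f.1).

(* s^(N-1) * p(c/s), for size p <= N *)
Definition poly_recip (c : C) (N : nat) (p : {poly C}) : {poly C} :=
  \poly_(i < N) (p`_(N.-1 - i) * c ^+ (N.-1 - i)).
(* h(c/s), i.e. h composed with s |-> c/s *)
Definition rf_comp_inv (c : C) (f : rfun) : rfun :=
  let N := maxn (size f.1) (size f.2) in (poly_recip c N f.1, poly_recip c N f.2).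

(* ---- points of P^1(C): Some z = z, None = infinity ---- *)
Definition pt := option C.
Definition pt0 : pt := Some 0.
Definition ptinf : pt := None.

Definition rf_ord (f : rfun) (P : pt) : int :=
  match P with
  | Some z => (mup z f.1)%:Z - (mup z f.2)%:Z
  | None => (size f.2)%:Z - (size f.1)%:Z
  end.
Definition rf_pole (f : rfun) (P : pt) : bool := (f.1 != 0) && (rf_ord f P < 0).

Definition has_divisor (f : rfun) (D : pt -> int) : Prop :=
  f.1 != 0 /\ forall P, rf_ord f P = D P.
Definition pt_ind (Q P : pt) : int := (Q == P)%:Z.

Definition pt_inv (c : C) (P : pt) : pt :=
  match P with
  | Some z => if z == 0 then None else Some (c / z)
  | None => Some 0
  end.
Definition pt_mul (c : C) (P : pt) : pt :=
  match P with Some z => Some (c * z) | None => None end.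

Definition subfield_pred (S : R -> Prop) : Prop :=
  S 1 /\ (forall u v, S u -> S v -> S (u - v)) /\
  (forall u v, S u -> S v -> S (u * v)) /\ (forall u, S u -> S u^-1).
Definition in_gen_field (d : 'I_3 -> 'I_3 -> R) (a b z : R) : Prop :=
  forall S : R -> Prop, subfield_pred S -> (forall i j, S (d i j)) -> S a -> S b -> S z.
Definition transcendental_over (d : 'I_3 -> 'I_3 -> R) (a b t : R) : Prop :=
  forall p : {poly R}, p != 0 -> (forall k, in_gen_field d a b p`_k) -> p.[t] != 0.

(* ---- kernel curve: K(X,Y) = XY(1 - t sum_{i,j} d_{i,j} X^i Y^j), with
   d i j standing for d_{i-1,j-1}.  For x = xn/xd, y = yn/yd we test
   xd^2 yd^2 K(x,y) = 0 as a polynomial identity. ---- *)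
Definition kernel_at (d : 'I_3 -> 'I_3 -> R) (t : R) (x y : rfun) : {poly C} :=
  x.1 * y.1 * x.2 * y.2
  - (t%:C)%C%:P * \sum_(i < 3) \sum_(j < 3)
      ((d i j)%:C)%C%:P * x.1 ^+ i * x.2 ^+ (2 - i) * y.1 ^+ j * y.2 ^+ (2 - j).

End RatFun.

(* Main.v *)
Require Import Defs.
From HB Require Import structures.
From mathcomp Require Import all_boot all_order all_algebra.
From mathcomp Require Import complex reals.
From mathcomp Require Import zify ring.
Set Implicit Arguments. Unset Strict Implicit.
Import Order.TTheory GRing.Theory Num.Theory.
Local Open Scope ring_scope.

Section H.
Variable R : realType.
Local Notation C := (R[i]).

Definition reg (z : C) (f1 f2 : {poly C}) :=
  exists n d : {poly C}, d.[z] != 0 /\ f1 * d = n * f2.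

Lemma reg_not_pole (f : rfun R) z : f.2 != 0 -> reg z f.1 f.2 -> ~~ rf_pole f (Some z).
Proof.
move=> f2N [n [d [dz E]]]; rewrite /rf_pole /=.
have [->|f1N] := eqVneq f.1 0; first by [].
have nN : n != 0.
  apply: contraNneq f1N => n0; move: E; rewrite n0 mul0r => /eqP.
  rewrite mulf_eq0 => /orP[/eqP //|/eqP d0]; by move: dz; rewrite d0 horner0 eqxx.
have : mup z (f.1 * d) = mup z (n * f.2) by rewrite E.
rewrite mupMl // mupM //= => ->.
rewrite -leNgt subr_ge0 lez_nat; lia.
Qed.

Lemma not_pole_reg (f : rfun R) z : f.2 != 0 -> ~~ rf_pole f (Some z) -> reg z f.1 f.2.
Proof.
move=> f2N; rewrite /rf_pole /= negb_and negbK -leNgt subr_ge0 lez_nat.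
have [f10|f1N] := eqVneq f.1 0.
  by move=> _; exists 0, 1; rewrite f10 hornerC oner_eq0 !mul0r.
move=> /= le.
case: (multiplicity_XsubC f.1 z) => m [v]; rewrite f1N /= => vz E1.
case: (multiplicity_XsubC f.2 z) => k [u]; rewrite f2N /= => uz E2.
have vN : v != 0 by apply: contraNneq vz => ->; rewrite root0.
have uN : u != 0 by apply: contraNneq uz => ->; rewrite root0.
have mE : mup z f.1 = m by rewrite E1 mupMr // mup_XsubCX eqxx.
have kE : mup z f.2 = k by rewrite E2 mupMr // mup_XsubCX eqxx.
rewrite mE kE in le.
exists (v * ('X - z%:P) ^+ (m - k)), u; split; first exact: uz.
rewrite E1 E2 -(subnK le) exprD subnK //; ring.
Qed.

Lemma reg_transport z (f1 f2 g1 g2 : {poly C}) :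
  reg z f1 f2 -> f2 != 0 -> f1 * g2 = g1 * f2 -> reg z g1 g2.
Proof.
move=> [n [d [dz E]]] f2N Efg; exists n, d; split => //.
apply: (mulIf f2N).
have -> : g1 * d * f2 = (g1 * f2) * d by ring.
rewrite -Efg.
have -> : f1 * g2 * d = (f1 * d) * g2 by ring.
rewrite E; ring.
Qed.

Lemma reg_mul z f1 f2 g1 g2 : reg z f1 f2 -> reg z g1 g2 -> reg z (f1 * g1) (f2 * g2).
Proof.
move=> [n [d [dz E]]] [n' [d' [dz' E']]]; exists (n * n'), (d * d'); split.
  by rewrite hornerM mulf_neq0.
have -> : f1 * g1 * (d * d') = (f1 * d) * (g1 * d') by ring.
rewrite E E'; ring.
Qed.

Lemma reg_sum z (w : C) (F1 F2 G1 G2 : {poly C}) : G2 != 0 ->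
  (F1 * G2 + G1 * F2) * 1 + w%:P * (F2 * G2) = 0 -> reg z G1 G2 -> reg z F1 F2.
Proof.
move=> G2N S [n [d [dz E]]]; exists (- (n + w%:P * d)), d; split => //.
apply: (mulIf G2N).
have -> : F1 * d * G2 = d * (F1 * G2) by ring.
have -> : F1 * G2 = - (G1 * F2 + w%:P * (F2 * G2)).
  by apply/eqP; rewrite -addr_eq0 -S mulr1 addrA.
have -> : d * - (G1 * F2 + w%:P * (F2 * G2)) = - ((G1 * d) * F2 + w%:P * d * F2 * G2) by ring.
rewrite E; ring.
Qed.


Lemma poly_eq_nz (p q : {poly C}) : (forall s, s != 0 -> p.[s] = q.[s]) -> p = q.
Proof.
move=> H; apply/eqP; rewrite -subr_eq0; apply/eqP.
apply: (@roots_geq_poly_eq0 _ _ [seq (i.+1)%:R | i <- iota 0 (size (p - q))]).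
- apply/allP => s /mapP [i _ ->]; rewrite /root hornerD hornerN H ?subrr //.
  by rewrite pnatr_eq0.
- rewrite map_inj_uniq ?iota_uniq // => i j /eqP; rewrite eqr_nat => /eqP [] //.
- by rewrite size_map size_iota.
Qed.

Lemma recip_eval c N (p : {poly C}) s : (size p <= N)%N -> s != 0 ->
  (poly_recip c N p).[s] = s ^+ N.-1 * p.[c / s].
Proof.
move=> le sN; rewrite /poly_recip horner_poly (horner_coef_wide _ le) mulr_sumr.
rewrite (reindex_inj rev_ord_inj) /=; apply: eq_bigr => i _.
have iN := ltn_ord i.
have -> : (N.-1 - (N - i.+1) = i)%N by lia.
have -> : (N.-1 = (N - i.+1) + i)%N by lia.
rewrite exprD expr_div_n; field.
by rewrite expf_neq0.
Qed.

Lemma recip_neq0 c N (p : {poly C}) : c != 0 -> p != 0 -> (size p <= N)%N ->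
  poly_recip c N p != 0.
Proof.
move=> cN pN le; apply: contraNneq pN => E; apply/eqP; apply: poly_eq_nz => w wN.
have sN : c / w != 0 by rewrite mulf_neq0 ?invr_eq0.
have := @recip_eval c N p _ le sN; rewrite E horner0 => /esym/eqP.
rewrite mulf_eq0 expf_eq0 (negbTE sN) andbF /= => /eqP.
have -> : c / (c / w) = w by field; apply/andP; split. by rewrite horner0.
Qed.

Lemma reg_comp c (f : rfun R) z : c != 0 -> z != 0 ->
  reg (c / z) f.1 f.2 -> reg z (rf_comp_inv c f).1 (rf_comp_inv c f).2.
Proof.
move=> cN zN [n [d [dz E]]].
set N := maxn (size f.1) (size f.2).
set K := maxn (size n) (size d).
have l1 : (size f.1 <= N)%N by rewrite leq_maxl.
have l2 : (size f.2 <= N)%N by rewrite leq_maxr.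
have l3 : (size n <= K)%N by rewrite leq_maxl.
have l4 : (size d <= K)%N by rewrite leq_maxr.
exists (poly_recip c K n), (poly_recip c K d); split.
  by rewrite recip_eval // mulf_neq0 // expf_neq0.
apply: poly_eq_nz => s sN /=.
rewrite !hornerM !recip_eval //.
have := congr1 (horner^~ (c / s)) E; rewrite /= !hornerM => E'.
by rewrite [LHS]mulrACA [RHS]mulrACA E' (mulrC (s ^+ K.-1)).
Qed.

Lemma pole_comp c (f : rfun R) w : c != 0 -> w != 0 -> f.2 != 0 ->
  rf_eq (rf_comp_inv c f) f -> rf_pole f (Some w) -> rf_pole f (Some (c / w)).
Proof.
move=> cN wN f2N Eq P.
have f1N : f.1 != 0 by move: P => /andP[].
apply: contraT => nP.
have r := not_pole_reg f2N nP.
have r' := reg_comp cN wN r.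
have c2N : (rf_comp_inv c f).2 != 0.
  by apply: recip_neq0 => //; rewrite leq_maxr.
have := reg_transport r' c2N Eq.
by move/(reg_not_pole f2N); rewrite P.
Qed.


Lemma transfer (g1 g2 h1 h2 : rfun R) (w om : C) :
  g1.1 != 0 -> g1.2 != 0 -> g2.2 != 0 -> h1.2 != 0 -> h2.2 != 0 ->
  rf_ord g1 (Some w) = 0 -> 0 <= rf_ord g2 (Some w) ->
  (g1.1 * h1.1 * (g2.2 * h2.2) + g2.1 * h2.1 * (g1.2 * h1.2))
     + om%:P * (g1.2 * h1.2 * (g2.2 * h2.2)) = 0 ->
  rf_pole h1 (Some w) -> rf_pole h2 (Some w).
Proof.
move=> g11 g12 g22 h12 h22 o1 o2 E P1.
apply: contraT => nP2.
have r2 := not_pole_reg h22 nP2.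
have rg2 : reg w g2.1 g2.2.
  apply: not_pole_reg => //; rewrite /rf_pole negb_and -leNgt.
  by apply/orP; right.
have rG := reg_mul rg2 r2.
have rF : reg w (g1.1 * h1.1) (g1.2 * h1.2).
  apply: (@reg_sum _ om _ _ (g2.1 * h2.1) (g2.2 * h2.2)) => //.
  - by rewrite mulf_neq0.
  - by rewrite mulr1.
have rgi : reg w g1.2 g1.1.
  apply: (@not_pole_reg (rf_inv g1) w g11).
  rewrite /rf_pole /= negb_and -leNgt; apply/orP; right.
  move: o1; rewrite /rf_ord /= => /eqP; rewrite subr_eq0 => /eqP ->.
  by rewrite subrr.
have rh := reg_mul rF rgi.
have rh1 : reg w h1.1 h1.2.
  apply: (reg_transport rh); first by rewrite !mulf_neq0.
  ring.
by move: P1; rewrite (negbTE (reg_not_pole h12 rh1)).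
Qed.

End H.

Unset Implicit Arguments.

Theorem lemma3p6 (R : realType)
  (* weighted small-step model: d i j = d_{i-1,j-1} >= 0, step set = support of d *)
  (d : 'I_3 -> 'I_3 -> R) (a b t q : R)
  (x y h1 h2 : rfun R) (P1 P2 P3 P4 : pt R) :
  (forall i j, 0 <= d i j) -> d (inord 1) (inord 1) = 0 ->
  0 < a -> 0 < b ->
  transcendental_over d a b t ->
  (* q real, nonzero, not a root of unity *)
  q != 0 -> (forall n : nat, (0 < n)%N -> q ^+ n != 1) ->
  (* rational parametrization of the kernel curve *)
  rf_valid x -> rf_valid y ->
  (forall c : R[i], ~ rf_eq x (rf_const c)) -> (forall c : R[i], ~ rf_eq y (rf_const c)) ->
  kernel_at d t x y = 0 ->
  rf_eq (rf_comp_inv 1 x) x -> rf_eq (rf_comp_inv (q%:C)%C y) y ->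
  let A := 1 - a^-1 in let B := 1 - b^-1 in let omega := 1 - A - B in
  let g1 := rf_add (rf_mul (rf_const (A%:C)%C) (rf_inv x))
                   (rf_mul (rf_const (- (t * d (inord 2) (inord 0)))%:C)%C (rf_inv y)) in
  let g2 := rf_add (rf_mul (rf_const (B%:C)%C) (rf_inv y))
                   (rf_mul (rf_const (- (t * d (inord 0) (inord 2)))%:C)%C (rf_inv x)) in
  has_divisor g1 (fun P => pt_ind P1 P + pt_ind P2 P - pt_ind (pt0 R) P - pt_ind (ptinf R) P) ->
  has_divisor g2 (fun P => pt_ind P3 P + pt_ind P4 P - pt_ind (pt0 R) P - pt_ind (ptinf R) P) ->
  (forall i, i \in [:: P1; P2; P3; P4] -> i != pt0 R /\ i != ptinf R) ->
  (* hypotheses on (h1, h2) in C(s)^2 *)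
  rf_valid h1 -> rf_valid h2 ->
  rf_eq (rf_add (rf_add (rf_mul g1 h1) (rf_mul g2 h2)) (rf_const (omega%:C)%C)) (rf_const 0) ->
  rf_eq (rf_comp_inv 1 h1) h1 -> rf_eq (rf_comp_inv (q%:C)%C h2) h2 ->
  let i2 := pt_inv (q%:C)%C in
  let sig := pt_mul (q%:C)%C in
  let sigi := pt_mul (q^-1)%:C%C in
  let L1m := [:: P1; P2; i2 P3; i2 P4] in
  let L1p := [:: pt_inv 1 P1; pt_inv 1 P2; sigi P3; sigi P4] in
  let L2m := [:: sig P1; sig P2; i2 P3; i2 P4] in
  let L2p := [:: pt_inv 1 P1; pt_inv 1 P2; P3; P4] in
  (forall P, rf_pole h1 P -> P != pt0 R -> P != ptinf R ->
     (P \notin L1m -> rf_pole h1 (sigi P)) /\ (P \notin L1p -> rf_pole h1 (sig P))) /\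
  (forall P, rf_pole h2 P -> P != pt0 R -> P != ptinf R ->
     (P \notin L2m -> rf_pole h2 (sigi P)) /\ (P \notin L2p -> rf_pole h2 (sig P))).
Proof.
move=> d0 d11 a0 b0 tr q0 qroot xv yv xnc ync ker xs ys A B omega g1 g2 dg1 dg2
  Pnz h1v h2v Heq h1s h2s i2 sig sigi L1m L1p L2m L2p.
have x1N : x.1 != 0.
  by apply/eqP => E; apply: (xnc 0); rewrite /rf_eq /= E polyC0 !mul0r.
have y1N : y.1 != 0.
  by apply/eqP => E; apply: (ync 0); rewrite /rf_eq /= E polyC0 !mul0r.
have g12 : g1.2 != 0 by rewrite /g1 /= !mul1r mulf_neq0.
have g22 : g2.2 != 0 by rewrite /g2 /= !mul1r mulf_neq0.
have g11 : g1.1 != 0 by case: dg1.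
have g21 : g2.1 != 0 by case: dg2.
have h12 : h1.2 != 0 by [].
have h22 : h2.2 != 0 by [].
have Eh0 : (g1.1 * h1.1 * (g2.2 * h2.2) + g2.1 * h2.1 * (g1.2 * h1.2)) * 1
     + (omega%:C)%C%:P * (g1.2 * h1.2 * (g2.2 * h2.2)) = 0.
  have H0 : (rf_const (R:=R) 0).1 = 0 by rewrite /= polyC0.
  have H1 : (rf_const (R:=R) 0).2 = 1 by [].
  move: Heq; rewrite /rf_eq H1 H0 mul0r => H; rewrite mulr1 in H; exact H.
have Eh : (g1.1 * h1.1 * (g2.2 * h2.2) + g2.1 * h2.1 * (g1.2 * h1.2))
     + (omega%:C)%C%:P * (g1.2 * h1.2 * (g2.2 * h2.2)) = 0.
  by rewrite -[RHS]Eh0 mulr1.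
have Eh' : (g2.1 * h2.1 * (g1.2 * h1.2) + g1.1 * h1.1 * (g2.2 * h2.2))
     + (omega%:C)%C%:P * (g2.2 * h2.2 * (g1.2 * h1.2)) = 0.
  by rewrite -Eh (addrC (g2.1 * _ * _)) (mulrC (g2.2 * h2.2)).
have PP : forall Q, Q \in [:: P1; P2; P3; P4] -> exists u, Q = Some u /\ u != 0.
  move=> Q /Pnz []; case: Q => [u uN _|_ H]; last by rewrite /ptinf eqxx in H.
  exists u; split => //; apply: contra uN => /eqP ->; by [].
have [u1 [E1 u1N]] : exists u, P1 = Some u /\ u != 0 by apply: PP; rewrite !inE eqxx ?orbT.
subst P1.
have [u2 [E2 u2N]] : exists u, P2 = Some u /\ u != 0 by apply: PP; rewrite !inE eqxx ?orbT.
subst P2.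
have [u3 [E3 u3N]] : exists u, P3 = Some u /\ u != 0 by apply: PP; rewrite !inE eqxx ?orbT.
subst P3.
have [u4 [E4 u4N]] : exists u, P4 = Some u /\ u != 0 by apply: PP; rewrite !inE eqxx ?orbT.
subst P4.
have ord2 : forall w, w != 0 -> 0 <= rf_ord g2 (Some w).
  move=> w wN; case: dg2 => _ ->; rewrite /pt_ind /pt0 /ptinf.
  have -> : (Some 0 == Some w) = false by apply/negbTE; apply: contra wN => /eqP [<-].
  by rewrite /= !subr0 addr_ge0.
have ord1 : forall w, w != 0 -> w != u1 -> w != u2 -> rf_ord g1 (Some w) = 0.
  move=> w wN n1 n2; case: dg1 => _ ->; rewrite /pt_ind /pt0 /ptinf.
  have -> : (Some 0 == Some w) = false by apply/negbTE; apply: contra wN => /eqP [<-].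
  have -> : (Some u1 == Some w) = false by apply/negbTE; apply: contra n1 => /eqP [->].
  have -> : (Some u2 == Some w) = false by apply/negbTE; apply: contra n2 => /eqP [->].
  by [].
have T12 : forall w, w != 0 -> w != u1 -> w != u2 -> rf_pole h1 (Some w) -> rf_pole h2 (Some w).
  move=> w wN n1 n2; apply: (transfer _ _ _ _ _ (ord1 w wN n1 n2) (ord2 w wN) Eh) => //.
have ord2' : forall w, w != 0 -> 0 <= rf_ord g1 (Some w).
  move=> w wN; case: dg1 => _ ->; rewrite /pt_ind /pt0 /ptinf.
  have -> : (Some 0 == Some w) = false by apply/negbTE; apply: contra wN => /eqP [<-].
  by rewrite /= !subr0 addr_ge0.
have ord1' : forall w, w != 0 -> w != u3 -> w != u4 -> rf_ord g2 (Some w) = 0.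
  move=> w wN n1 n2; case: dg2 => _ ->; rewrite /pt_ind /pt0 /ptinf.
  have -> : (Some 0 == Some w) = false by apply/negbTE; apply: contra wN => /eqP [<-].
  have -> : (Some u3 == Some w) = false by apply/negbTE; apply: contra n1 => /eqP [->].
  have -> : (Some u4 == Some w) = false by apply/negbTE; apply: contra n2 => /eqP [->].
  by [].
have T21 : forall w, w != 0 -> w != u3 -> w != u4 -> rf_pole h2 (Some w) -> rf_pole h1 (Some w).
  move=> w wN n1 n2; apply: (transfer _ _ _ _ _ (ord1' w wN n1 n2) (ord2' w wN) Eh') => //.
have qN : (q%:C)%C != 0 by rewrite fmorph_eq0.
have oneN : (1 : R[i]) != 0 by rewrite oner_eq0.
have C1 : forall w, w != 0 -> rf_pole h1 (Some w) -> rf_pole h1 (Some (1 / w)).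
  by move=> w wN; apply: pole_comp.
have Cq : forall w, w != 0 -> rf_pole h2 (Some w) -> rf_pole h2 (Some ((q%:C)%C / w)).
  by move=> w wN; apply: pole_comp.
have nzd : forall c w : R[i], c != 0 -> w != 0 -> c / w != 0.
  by move=> c w cN wN; rewrite mulf_neq0 ?invr_eq0.
have sigiE : forall z, z != 0 -> sigi (Some z) = Some (1 / ((q%:C)%C / z)).
  move=> z zN; rewrite /sigi /= fmorphV /=; congr Some; field; rewrite qN zN //.
have sigE : forall z, z != 0 -> sig (Some z) = Some ((q%:C)%C / (1 / z)).
  move=> z zN; rewrite /sig /=; congr Some; field; rewrite zN //.
have zNf : forall z, (Some z != pt0 R) -> z != 0.
  by move=> z; apply: contra => /eqP ->.
have nz1 : forall z : R[i], z != 0 -> 1 / z != 0 by move=> z zN; apply: nzd.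
have nzq : forall z : R[i], z != 0 -> (q%:C)%C / z != 0 by move=> z zN; apply: nzd.
split=> P hp Pn0 Pni; (case: P hp Pn0 Pni => [z|] hp Pn0 Pni; last by rewrite /ptinf eqxx in Pni);
  have zN := zNf z Pn0; split => H; move: H; rewrite !inE !negb_or => /and4P[n1 n2 n3 n4].
- have w1 : z != u1 by apply: contra n1 => /eqP ->.
  have w2 : z != u2 by apply: contra n2 => /eqP ->.
  have p2 := Cq z zN (T12 z zN w1 w2 hp).
  have w3 : (q%:C)%C / z != u3.
    apply: contra n3 => /eqP E; rewrite /= (negbTE u3N) -E; apply/eqP; congr Some; field; rewrite ?qN ?zN //.
  have w4 : (q%:C)%C / z != u4.
    apply: contra n4 => /eqP E; rewrite /= (negbTE u4N) -E; apply/eqP; congr Some; field; rewrite ?qN ?zN //.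
  have p1 := T21 _ (nzq _ zN) w3 w4 p2.
  have p1' := C1 _ (nzq _ zN) p1.
  rewrite (sigiE z zN).
  exact: p1'.
- have w1 : 1 / z != u1.
    apply: contra n1 => /eqP E; rewrite /= (negbTE u1N) -E; apply/eqP; congr Some; field; rewrite ?qN ?zN //.
  have w2 : 1 / z != u2.
    apply: contra n2 => /eqP E; rewrite /= (negbTE u2N) -E; apply/eqP; congr Some; field; rewrite ?qN ?zN //.
  have p2 := Cq _ (nz1 _ zN) (T12 _ (nz1 _ zN) w1 w2 (C1 z zN hp)).
  have w3 : (q%:C)%C / (1 / z) != u3.
    apply: contra n3 => /eqP E; rewrite /sigi /= -E fmorphV; apply/eqP; congr Some; field; rewrite ?qN ?zN //.
  have w4 : (q%:C)%C / (1 / z) != u4.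
    apply: contra n4 => /eqP E; rewrite /sigi /= -E fmorphV; apply/eqP; congr Some; field; rewrite ?qN ?zN //.
  rewrite (sigE z zN); exact: T21 _ (nzq _ (nz1 _ zN)) w3 w4 p2.
- have p2 := Cq z zN hp.
  have w3 : (q%:C)%C / z != u3.
    apply: contra n3 => /eqP E; rewrite /= (negbTE u3N) -E; apply/eqP; congr Some; field; rewrite ?qN ?zN //.
  have w4 : (q%:C)%C / z != u4.
    apply: contra n4 => /eqP E; rewrite /= (negbTE u4N) -E; apply/eqP; congr Some; field; rewrite ?qN ?zN //.
  have p1 := C1 _ (nzq _ zN) (T21 _ (nzq _ zN) w3 w4 p2).
  have w1 : 1 / ((q%:C)%C / z) != u1.
    apply: contra n1 => /eqP E; rewrite /sig /= -E; apply/eqP; congr Some; field; rewrite ?qN ?zN //.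
  have w2 : 1 / ((q%:C)%C / z) != u2.
    apply: contra n2 => /eqP E; rewrite /sig /= -E; apply/eqP; congr Some; field; rewrite ?qN ?zN //.
  rewrite (sigiE z zN); exact: T12 _ (nz1 _ (nzq _ zN)) w1 w2 p1.
- have w3 : z != u3 by apply: contra n3 => /eqP ->.
  have w4 : z != u4 by apply: contra n4 => /eqP ->.
  have p1 := C1 z zN (T21 z zN w3 w4 hp).
  have w1 : 1 / z != u1.
    apply: contra n1 => /eqP E; rewrite /= (negbTE u1N) -E; apply/eqP; congr Some; field; rewrite ?qN ?zN //.
  have w2 : 1 / z != u2.
    apply: contra n2 => /eqP E; rewrite /= (negbTE u2N) -E; apply/eqP; congr Some; field; rewrite ?qN ?zN //.
  rewrite (sigE z zN); exact: Cq _ (nz1 _ zN) (T12 _ (nz1 _ zN) w1 w2 p1).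
Qed.
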